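(* For all $\zeta\in\mathbb{C}$ with $|\Im\zeta|\le\pi/2$, \[ \frac{1}{\sqrt2}\left|\frac{e^\zeta}{1+e^\zeta}\right|\le\left|\frac{\operatorname{arcsinh}(e^\zeta)}{1+\operatorname{arcsinh}(e^\zeta)}\right|\le\sqrt2\left|\frac{e^\zeta}{1+e^\zeta}\right|, \] and for all $x\in\mathbb{R}$, $\frac{\operatorname{arcsinh}(e^x)}{1+\operatorname{arcsinh}(e^x)}\le\frac{e^x}{1+e^x}$.
   Context: $\operatorname{arcsinh}$ denotes the principal branch, $\operatorname{arcsinh}(w)=\log(w+\sqrt{1+w^2})$, extended continuously to the boundary $|\Im\zeta|=\pi/2$. *)

(* Defs.v *)
From Stdlib Require Import Reals.
From Coquelicot Require Import Complex.

Open Scope R_scope.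

Definition Cexp (z : C) : C :=
  (exp (Re z) * cos (Im z), exp (Re z) * sin (Im z)).

(* Principal argument, with values in (-PI, PI]. *)
Definition Carg (z : C) : R :=
  if Rle_dec 0 (Im z) then acos (Re z / Cmod z) else - acos (Re z / Cmod z).

Definition Clog (z : C) : C := (ln (Cmod z), Carg z).

(* Principal square root (Re >= 0; on the negative real axis sqrt(-a) = i sqrt a,
   i.e. sqrt z = exp (log z / 2)). *)
Definition Csqrt (z : C) : C :=
  (sqrt ((Cmod z + Re z) / 2),
   (if Rle_dec 0 (Im z) then 1 else -1) * sqrt ((Cmod z - Re z) / 2)).

Definition Casinh (w : C) : C :=
  Clog (Cplus w (Csqrt (Cplus (RtoC 1) (Cmult w w)))).

(* zeta |-> arcsinh(e^zeta) on the closed strip |Im zeta| <= PI/2, extended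
   continuously to the boundary.  In the open strip it is the principal
   branch; on Im zeta = PI/2 the principal formula already gives the continuous
   extension; on Im zeta = -PI/2 the continuous extension is obtained from
   the symmetry arcsinh(conj w) = conj(arcsinh w) (valid in the open strip). *)
Definition asinh_exp (zeta : C) : C :=
  if Rle_dec 0 (Im zeta) then Casinh (Cexp zeta)
  else Cconj (Casinh (Cexp (Cconj zeta))).

Definition Rasinh (x : R) : R := ln (x + sqrt (1 + x ^ 2)).

(* Main.v *)
Require Import Defs.
From Stdlib Require Import Reals Lra Psatz.
From Coquelicot Require Import Complex.
From Coquelicot Require Import Coquelicot.
Open Scope R_scope.
Lemma mono0 (f df : R -> R) a0 y : a0 <= y ->
  (forall x, a0 <= x <= y -> is_derive f x (df x)) -> (forall x, a0 <= x <= y -> 0 <= df x) -> f a0 <= f y.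
Proof.
intros Hy Hd Hp. destruct (Req_dec y a0) as [->|Hne]; [lra|].
destruct (MVT_cor2 f df a0 y) as [c [Hc1 Hc2]]; [lra| |].
- intros c Hc. apply is_derive_Reals. apply Hd. lra.
- assert (0 <= df c) by (apply Hp; lra). nra.
Qed.

Lemma sin_le_id t : 0 <= t -> sin t <= t.
Proof.
intros Ht.
assert (H := mono0 (fun x => x - sin x) (fun x => 1 - cos x) 0 t Ht). simpl in H.
rewrite sin_0 in H.
cut (0 - 0 <= t - sin t). lra. apply H.
- intros x _. auto_derive; auto. ring.
- intros x _. assert (H1 := COS_bound x). lra.
Qed.

Lemma half_tan t : 0 <= t <= PI/2 -> t * (1 + cos t) <= 2 * sin t.
Proof.
intros Ht. set (u := t/2).
assert (Hu: t = 2*u) by (unfold u; field). rewrite Hu, sin_2a, cos_2a_cos.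
assert (HP := PI_RGT_0).
assert (H := mono0 (fun x => sin x - x * cos x) (fun x => x * sin x) 0 u ltac:(unfold u; lra)). simpl in H.
rewrite sin_0, Rmult_0_l in H.
assert (0 - 0 <= sin u - u * cos u).
{ apply H.
- intros x _. auto_derive; auto. ring.
- intros x Hx. apply Rmult_le_pos. lra. apply sin_ge_0; unfold u in *; lra. }
assert (0 <= cos u) by (apply cos_ge_0; unfold u in *; lra).
nra.
Qed.
Lemma ln_le_sinh r : 1 <= r -> ln r <= (r - /r)/2.
Proof.
intros Hr.
assert (H := mono0 (fun x => (x - /x)/2 - ln x) (fun x => (x-1)^2/(2*x^2)) 1 r Hr).
simpl in H. rewrite ln_1 in H.
cut (0 <= (r - / r) / 2 - ln r). lra.
replace 0 with ((1 - /1)/2 - 0) by (rewrite Rinv_1; lra).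
apply H.
- intros x Hx. auto_derive. lra. field. lra.
- intros x Hx. apply Rmult_le_pos. apply pow2_ge_0. apply Rlt_le, Rinv_0_lt_compat. nra.
Qed.

Lemma ln_ge_cusa r : 1 <= r -> 3*(r*r-1)/(r*r+4*r+1) <= ln r.
Proof.
intros Hr.
assert (H := mono0 (fun x => ln x - 3*(x*x-1)/(x*x+4*x+1)) (fun x => (x-1)^4/(x*(x*x+4*x+1)^2)) 1 r Hr).
simpl in H. rewrite ln_1 in H.
cut (0 <= ln r - 3*(r*r-1)/(r*r+4*r+1)). lra.
replace 0 with (0 - 3*(1*1-1)/(1*1+4*1+1)) by field.
apply H.
- intros x Hx. auto_derive. nra. field. nra.
- intros x Hx. apply Rmult_le_pos. assert (0 <= ((x-1)*(x-1))*((x-1)*(x-1))) by (apply Rmult_le_pos; nra). nra. apply Rlt_le, Rinv_0_lt_compat. assert (0 < x*x+4*x+1) by nra. apply Rmult_lt_0_compat; [lra|]. apply Rmult_lt_0_compat; nra.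
Qed.
Lemma X1 a s : 0 <= a -> a <= s -> s*s*(9-a*a) - 12*a*s + 3*a*a <= 0 ->
  0 <= s*s*(a*a-2*a-1) + 4*a*a*s + 2*a*a.
Proof. intros. destruct (Rle_dec a (5/2)). nra. assert (0 <= a*a-2*a-1) by nra. nra. Qed.

Lemma X0 a s : 0 <= a -> a <= s -> s*s*(9-a*a) - 12*a*s + 3*a*a <= 0 ->
  0 <= s*s*(a*a-2*a) + 3*a*a - 2*a + 1.
Proof.
intros Ha Has HQ. destruct (Rle_dec a 2) as [Ha2|Ha2]; [|assert (0 <= a*a-2*a) by nra; nra].
remember (27/10 - 2*a + 7/10*a*a) as L eqn:HLd.
assert (HL: 0 < L) by (rewrite HLd; assert (0 <= (a-10/7)*(a-10/7)) by apply Rle_0_sqr; nra).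
assert (HC: 0 <= L*(39/10*a*a-2*a+1) - 324/100*a*a) by (rewrite HLd; assert (0 <= (a*a-1685/1000*a+6/10)*(a*a-1685/1000*a+6/10)) by apply Rle_0_sqr; assert (0 <= (a-98/100)*(a-98/100)) by apply Rle_0_sqr; nra).
assert (HR: 0 <= L*s*s - 36/10*a*s + (39/10*a*a-2*a+1)).
{ assert (0 <= L*(L*s*s - 36/10*a*s + (39/10*a*a-2*a+1))).
  { replace (L*(L*s*s - 36/10*a*s + (39/10*a*a-2*a+1))) with ((L*s - 18/10*a)^2 + (L*(39/10*a*a-2*a+1) - 324/100*a*a)) by field.
    apply Rplus_le_le_0_compat; [apply pow2_ge_0|exact HC]. }
  nra. }
rewrite HLd in HR. nra.
Qed.

Lemma coreI a t s c n : 0 <= a -> a <= s -> s*s*(9-a*a) - 12*a*s + 3*a*a <= 0 ->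
  0 <= c -> 0 <= n -> c*c+n*n = 1 -> n <= t ->
  (s*s+n*n)*(1+2*a+(a*a+t*t)) <= 2*(a*a+t*t)*(1+2*(s*c)+(s*s+n*n)).
Proof.
intros Ha Has HQ Hc Hn Hcn Hnt.
assert (H0 := X0 a s Ha Has HQ). assert (H1 := X1 a s Ha Has HQ).
assert (Hc1 : c <= 1) by nra.
assert (Hs : 0 <= s) by lra.
set (m := n*n).
assert (HF : 0 <= (a*a+m)*(s*s+m+4*s*c+2) - (2*a+1)*(s*s+m)).
{ replace ((a*a+m)*(s*s+m+4*s*c+2) - (2*a+1)*(s*s+m)) with
    (s*s*(a*a-2*a-1) + 2*a*a + 4*a*a*s*c + m*((a-1)^2 + s*s + m + 4*s*c)) by ring.
  assert (Hm : m = 1 - c*c) by (unfold m; lra).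
  assert (0 <= m*m) by nra. assert (0 <= m*(4*s*c)) by (rewrite Hm; apply Rmult_le_pos; nra).
  assert ((1-c)*(s*s+(a-1)^2) <= m*(s*s+(a-1)^2)) by (rewrite Hm; apply Rmult_le_compat_r; nra).
  assert (0 <= (1-c)*(s*s*(a*a-2*a) + 3*a*a - 2*a + 1)) by (apply Rmult_le_pos; lra).
  assert (0 <= c*(s*s*(a*a-2*a-1) + 4*a*a*s + 2*a*a)) by (apply Rmult_le_pos; lra).
  nra. }
assert (a*a+m <= a*a+t*t) by (unfold m; nra).
assert (0 <= s*s+m+4*s*c+2) by (unfold m; nra).
unfold m in *. nra.
Qed.

Lemma coreII a t s c n : 0 <= a -> a <= s ->
  0 <= c -> 0 <= n -> c*c+n*n = 1 -> 0 <= t -> t*(1+c) <= 2*n ->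
  (a*a+t*t)*(1+2*(s*c)+(s*s+n*n)) <= 2*(s*s+n*n)*(1+2*a+(a*a+t*t)).
Proof.
intros Ha Has Hc Hn Hcn Ht Htn.
assert (Hc1 : c <= 1) by nra. assert (Hs : 0 <= s) by lra.
set (E := s*s+n*n). set (X := 2*s*c + 1 - E).
cut ((a*a+t*t)*X <= 2*(2*a+1)*E). { unfold X, E. nra. }
destruct (Rle_dec X 0) as [HX|HX].
{ assert (0 <= E) by (unfold E; nra). nra. }
assert (Ht2 : t*t*(1+c) <= 4*(1-c)).
{ assert (t*(1+c)*(t*(1+c)) <= 4*(n*n)) by (assert (0 <= t*(1+c)) by nra; replace (4*(n*n)) with ((2*n)*(2*n)) by ring; apply Rmult_le_compat; lra).
  assert (t*t*(1+c)*(1+c) <= 4*(1-c)*(1+c)) by nra.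
  nra. }
assert (HXc : X <= 2*s*c + c*c - s*s) by (unfold X, E; nra).
assert (HA : a*a*X <= 2*a*s*s + s*s).
{ assert (a*c <= s) by nra.
  assert (a*c*s <= s*s) by (apply Rmult_le_compat_r; lra).
  assert (a*a*(2*s*c) <= 2*a*s*s) by (replace (a*a*(2*s*c)) with (2*a*(a*c*s)) by ring; replace (2*a*s*s) with (2*a*(s*s)) by ring; apply Rmult_le_compat_l; lra).
  assert (a*a*(c*c) <= s*s) by (assert (c*c <= 1) by nra; assert (a*a <= s*s) by nra; nra). nra. }
assert (HB : 4*(1-c)*X <= 8*(1-c)*(c*c)).
{ assert (X <= 2*c*c) by (assert (0 <= (s-c)^2) by apply pow2_ge_0; nra).
  replace (8*(1-c)*(c*c)) with (4*(1-c)*(2*c*c)) by ring. apply Rmult_le_compat_l; lra. }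
assert (HE : E = s*s + (1-c)*(1+c)) by (unfold E; nra).
assert ((1+c)*((a*a+t*t)*X) <= ((1+c)*a*a + 4*(1-c))*X) by (replace ((1+c)*((a*a+t*t)*X)) with (((1+c)*a*a + t*t*(1+c))*X) by ring; apply Rmult_le_compat_r; lra).
assert (((1+c)*a*a + 4*(1-c))*X <= (1+c)*(2*a*s*s + s*s) + 8*(1-c)*(c*c)) by (assert ((1+c)*(a*a*X) <= (1+c)*(2*a*s*s + s*s)) by (apply Rmult_le_compat_l; lra); nra).
assert (8*(1-c)*(c*c) <= 2*(1-c)*(1+c)*(1+c)) by (assert (0 <= (1-c)*((1-c)*(1+3*c))) by (apply Rmult_le_pos; nra); nra).
assert ((1+c)*((a*a+t*t)*X) <= (1+c)*(2*(2*a+1)*E)).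
{ rewrite HE. assert (0 <= (1+c)*(2*a*s*s+s*s)) by (apply Rmult_le_pos; nra). assert (0 <= (1+c)*(1-c)*(1+c)*a) by (repeat apply Rmult_le_pos; lra). nra. }
apply Rmult_le_reg_l with (1+c); lra.
Qed.
Lemma Cmod_sq (z : C) : Cmod z * Cmod z = fst z * fst z + snd z * snd z.
Proof. unfold Cmod. rewrite sqrt_sqrt. ring. nra. Qed.

Lemma Cmod_nonneg' (z : C) : 0 <= Cmod z.
Proof. unfold Cmod. apply sqrt_pos. Qed.

Lemma key_lo X Y U V : 0 <= X -> 0 < Y -> 0 <= U -> 0 < V ->
  X*X*(V*V) <= 2*(U*U)*(Y*Y) -> / sqrt 2 * (X/Y) <= U/V.
Proof.
intros HX HY HU HV H.
assert (Hs2 : 0 < sqrt 2) by (apply sqrt_lt_R0; lra).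
assert (Hss : sqrt 2 * sqrt 2 = 2) by (apply sqrt_sqrt; lra).
assert (HXV : X*V <= sqrt 2 * (U*Y)).
{ apply Rsqr_incr_0_var. unfold Rsqr.
  replace (sqrt 2 * (U * Y) * (sqrt 2 * (U * Y))) with ((sqrt 2 * sqrt 2)*(U*U)*(Y*Y)) by ring.
  rewrite Hss. nra. apply Rmult_le_pos; [lra|]. apply Rmult_le_pos; lra. }
apply (Rmult_le_reg_r (sqrt 2 * Y * V)). apply Rmult_lt_0_compat; [apply Rmult_lt_0_compat|]; lra.
replace (/ sqrt 2 * (X / Y) * (sqrt 2 * Y * V)) with (X*V) by (field; lra).
replace (U / V * (sqrt 2 * Y * V)) with (sqrt 2 * (U * Y)) by (field; lra). lra.
Qed.

Lemma key_hi X Y U V : 0 <= X -> 0 < Y -> 0 <= U -> 0 < V ->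
  U*U*(Y*Y) <= 2*(X*X)*(V*V) -> U/V <= sqrt 2 * (X/Y).
Proof.
intros HX HY HU HV H.
assert (Hs2 : 0 < sqrt 2) by (apply sqrt_lt_R0; lra).
assert (Hss : sqrt 2 * sqrt 2 = 2) by (apply sqrt_sqrt; lra).
assert (HXV : U*Y <= sqrt 2 * (X*V)).
{ apply Rsqr_incr_0_var. unfold Rsqr.
  replace (sqrt 2 * (X * V) * (sqrt 2 * (X * V))) with ((sqrt 2 * sqrt 2)*(X*X)*(V*V)) by ring.
  rewrite Hss. nra. apply Rmult_le_pos; [lra|]. apply Rmult_le_pos; lra. }
apply (Rmult_le_reg_r (Y * V)). apply Rmult_lt_0_compat; lra.
replace (sqrt 2 * (X / Y) * (Y * V)) with (sqrt 2 * (X*V)) by (field; lra).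
replace (U / V * (Y * V)) with (U * Y) by (field; lra). lra.
Qed.

Lemma cusaQ a s h : 0 <= a -> a <= s -> h*h = 1 + s*s -> 0 <= h -> 3*s <= a*(2+h) ->
  s*s*(9-a*a) - 12*a*s + 3*a*a <= 0.
Proof.
intros Ha Has Hh Hh0 Hc.
destruct (Rle_dec (2*a) (3*s)).
- assert ((3*s-2*a)*(3*s-2*a) <= (a*h)*(a*h)) by (apply Rmult_le_compat; nra).
  nra.
- nra.
Qed.

Lemma core_c (w : C) : 0 <= fst w -> 0 <= snd w ->
  / sqrt 2 * Cmod (Cdiv w (Cplus (RtoC 1) w)) <= Cmod (Cdiv (Casinh w) (Cplus (RtoC 1) (Casinh w)))
  /\ Cmod (Cdiv (Casinh w) (Cplus (RtoC 1) (Casinh w))) <= sqrt 2 * Cmod (Cdiv w (Cplus (RtoC 1) w)).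
Proof.
destruct w as [x y]. simpl fst; simpl snd. intros Hx Hy.
unfold Casinh, Csqrt, Re, Im.
set (z := Cplus (RtoC 1) (Cmult (x, y) (x, y))).
assert (Hzr : fst z = 1 + (x*x - y*y)) by (unfold z; simpl; ring).
assert (Hzi : snd z = 2*x*y) by (unfold z; simpl; ring).
assert (Hmz := Cmod_sq z). assert (Hmz0 := Cmod_nonneg' z).
assert (Hre : Rabs (fst z) <= Cmod z).
{ apply Rsqr_incr_0_var. rewrite <- Rsqr_abs. unfold Rsqr. nra. auto. }
assert (Hre1 := Rabs_le_between (fst z) (Cmod z)). 
destruct (Rle_dec 0 (snd z)) as [_|Hn]; [|exfalso; rewrite Hzi in Hn; apply Hn; nra].
rewrite Rmult_1_l.
set (p := sqrt ((Cmod z + fst z) / 2)). set (q := sqrt ((Cmod z - fst z) / 2)).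
assert (Hp0 : 0 <= p) by apply sqrt_pos. assert (Hq0 : 0 <= q) by apply sqrt_pos.
assert (Hpp : p*p = (Cmod z + fst z)/2) by (apply sqrt_sqrt; lra).
assert (Hqq : q*q = (Cmod z - fst z)/2) by (apply sqrt_sqrt; lra).
assert (Hpq : p*q = x*y).
{ unfold p, q. rewrite <- sqrt_mult_alt by lra.
  replace ((Cmod z + fst z) / 2 * ((Cmod z - fst z) / 2)) with ((x*y)*(x*y)).
  apply sqrt_square; nra.
  replace ((Cmod z + fst z) / 2 * ((Cmod z - fst z) / 2)) with ((Cmod z * Cmod z - fst z * fst z)/4) by field.
  rewrite Hmz, Hzi. field. }
assert (Hpq2 : p*p - q*q = 1 + x*x - y*y) by (rewrite Hpp, Hqq, Hzr; field).
clearbody p q. clear Hpp Hqq Hre Hre1 Hmz Hmz0 Hzr Hzi.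
set (S := Cplus (x, y) (p, q)).
assert (HS : S = (x+p, y+q)) by reflexivity.
clearbody S. subst S.
unfold Clog, Carg, Re, Im. simpl fst; simpl snd.
set (Sx := x + p). set (Sy := y + q).
assert (HSx : 0 <= Sx) by (unfold Sx; lra). assert (HSy : 0 <= Sy) by (unfold Sy; lra).
set (rho := Cmod (Sx, Sy)).
assert (Hrho2 : rho * rho = Sx*Sx + Sy*Sy) by (unfold rho; rewrite Cmod_sq; reflexivity).
assert (Hrho0 : 0 <= rho) by apply Cmod_nonneg'.
assert (Hrho1 : 1 <= rho).
{ set (v := (x-p)*(x-p) + (y-q)*(y-q)).
  assert (Huv : (Sx*Sx + Sy*Sy) * v = 1).
  { unfold v, Sx, Sy.
    replace ((((x+p)*(x+p)) + ((y+q)*(y+q))) * ((x-p)*(x-p) + (y-q)*(y-q))) with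
     (((x*x - y*y) - (p*p - q*q))^2 + (2*(x*y) - 2*(p*q))^2) by ring.
    rewrite Hpq2, Hpq. ring. }
  assert (Hv : v <= Sx*Sx + Sy*Sy) by (unfold v, Sx, Sy; nra).
  assert (0 <= v) by (unfold v; nra).
  assert (1 <= rho*rho) by nra. nra. }
assert (Hrhop : 0 < rho) by lra.
clearbody rho.
assert (E1 : Sx*Sx - 2*x*Sx - Sy*Sy + 2*y*Sy = 1) by (unfold Sx, Sy; nra).
assert (E2 : Sx*Sy - x*Sy - y*Sx = 0) by (unfold Sx, Sy; nra).
clearbody Sx Sy. clear Hpq Hpq2 Hp0 Hq0.
destruct (Rle_dec 0 Sy) as [_|HH]; [|lra].
set (c0 := Sx / rho).
assert (Hc0 : 0 <= c0 <= 1).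
{ unfold c0. split. apply Rdiv_le_0_compat; lra.
  apply Rmult_le_reg_r with rho; [lra|]. unfold Rdiv. rewrite Rmult_assoc, Rinv_l by lra. nra. }
set (t := acos c0).
assert (Hct : cos t = c0) by (apply cos_acos; lra).
assert (Hst : sin t = Sy / rho).
{ unfold t. rewrite sin_acos by lra.
  replace (1 - c0²) with ((Sy/rho)²). apply sqrt_Rsqr. apply Rdiv_le_0_compat; lra.
  unfold c0, Rsqr. field_simplify_eq; [nra | lra]. }
assert (Ht : 0 <= t <= PI/2).
{ assert (Hb := acos_bound c0). fold t in Hb. split; [lra|].
  destruct (Rle_dec t (PI/2)); auto. exfalso.
  assert (cos t < 0) by (apply cos_lt_0; lra). lra. }
clearbody t. 
set (c := cos t) in *. set (n := sin t) in *.
assert (Hcn : c*c + n*n = 1) by (unfold c, n; rewrite <- (sin2_cos2 t); unfold Rsqr; ring).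
assert (HSx' : Sx = rho * c) by (rewrite Hct; unfold c0; field; lra).
assert (HSy' : Sy = rho * n) by (rewrite Hst; field; lra).
assert (Hn0 : 0 <= n) by (rewrite Hst; apply Rdiv_le_0_compat; lra).
assert (Hc00 : 0 <= c) by lra.
assert (Hnt : n <= t) by (apply sin_le_id; lra).
assert (Htn : t * (1 + c) <= 2 * n) by (apply half_tan; lra).
clear Hct Hst c0 Hc0.
subst Sx Sy.
assert (Hxr : 2*rho*x = c*(rho*rho-1)).
{ assert (c*((rho*c)*(rho*c) - 2*x*(rho*c) - (rho*n)*(rho*n) + 2*y*(rho*n)) + 2*n*((rho*c)*(rho*n) - x*(rho*n) - y*(rho*c))
     = rho*rho*c*(c*c+n*n) - 2*x*rho*(c*c+n*n)) by ring.
  rewrite E1, E2, Hcn in H. lra. }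
assert (Hyr : 2*rho*y = n*(rho*rho+1)).
{ assert (-n*((rho*c)*(rho*c) - 2*x*(rho*c) - (rho*n)*(rho*n) + 2*y*(rho*n)) + 2*c*((rho*c)*(rho*n) - x*(rho*n) - y*(rho*c))
     = rho*rho*n*(c*c+n*n) - 2*y*rho*(c*c+n*n)) by ring.
  rewrite E1, E2, Hcn in H. lra. }
clear E1 E2 Hrho2.
set (s := (rho - /rho)/2). set (h := (rho + /rho)/2). set (a := ln rho).
assert (Hxs : x = s*c) by (unfold s; apply (Rmult_eq_reg_l (2*rho)); [rewrite Hxr; field|]; lra).
assert (Hyh : y = h*n) by (unfold h; apply (Rmult_eq_reg_l (2*rho)); [rewrite Hyr; field|]; lra).
assert (Hhs : h*h = 1 + s*s) by (unfold h, s; field; lra).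
assert (Hh0 : 0 <= h) by (unfold h; assert (0 < /rho) by (apply Rinv_0_lt_compat; lra); lra).
assert (Has : a <= s) by (apply ln_le_sinh; lra).
assert (Hcu := ln_ge_cusa rho Hrho1). fold a in Hcu.
assert (Ha0 : 0 <= a).
{ eapply Rle_trans; [|exact Hcu]. apply Rdiv_le_0_compat; nra. }
assert (H3 : 3*s <= a*(2+h)).
{ unfold s, h. apply (Rmult_le_reg_l (2*rho)); [lra|].
  replace (2 * rho * (3 * ((rho - / rho) / 2))) with (3*(rho*rho-1)) by (field; lra).
  replace (2 * rho * (a * (2 + (rho + / rho) / 2))) with (a*(rho*rho+4*rho+1)) by (field; lra).
  apply (Rmult_le_reg_r (/(rho*rho+4*rho+1))). apply Rinv_0_lt_compat; nra.
  replace (3 * (rho * rho - 1) * / (rho * rho + 4 * rho + 1)) with (3 * (rho * rho - 1) / (rho * rho + 4 * rho + 1)) by reflexivity.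
  replace (a * (rho * rho + 4 * rho + 1) * / (rho * rho + 4 * rho + 1)) with a by (field; nra). exact Hcu. }
assert (HQ := cusaQ a s h Ha0 Has Hhs Hh0 H3).
assert (HI := coreI a t s c n Ha0 Has HQ Hc00 Hn0 Hcn Hnt).
assert (HII := coreII a t s c n Ha0 Has Hc00 Hn0 Hcn (proj1 Ht) Htn).
clearbody s h a. subst x y.
assert (Hw1 : Cplus (RtoC 1) (s*c, h*n) <> 0).
{ intros HH. apply (f_equal fst) in HH. simpl in HH. nra. }
assert (HA1 : Cplus (RtoC 1) (a, t) <> 0).
{ intros HH. apply (f_equal fst) in HH. simpl in HH. lra. }
rewrite !Cmod_div by assumption.
assert (HX := Cmod_sq (s*c, h*n)). assert (HY := Cmod_sq (Cplus (RtoC 1) (s*c, h*n))).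
assert (HU := Cmod_sq (a, t)). assert (HV := Cmod_sq (Cplus (RtoC 1) (a, t))).
simpl fst in HX, HY, HU, HV; simpl snd in HX, HY, HU, HV.
assert (HX' : Cmod (s*c, h*n) * Cmod (s*c, h*n) = s*s + n*n) by (rewrite HX; nra).
assert (HY' : Cmod (Cplus (RtoC 1) (s*c, h*n)) * Cmod (Cplus (RtoC 1) (s*c, h*n)) = 1 + 2*(s*c) + (s*s+n*n)) by (rewrite HY; nra).
assert (HU' : Cmod (a,t) * Cmod (a,t) = a*a+t*t) by (rewrite HU; ring).
assert (HV' : Cmod (Cplus (RtoC 1) (a, t)) * Cmod (Cplus (RtoC 1) (a, t)) = 1 + 2*a + (a*a+t*t)) by (rewrite HV; ring).
assert (HYp : 0 < Cmod (Cplus (RtoC 1) (s*c, h*n))).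
{ assert (0 <= Cmod (Cplus (RtoC 1) (s*c, h*n))) by apply Cmod_nonneg'. assert (0 <= s) by lra. nra. }
assert (HVp : 0 < Cmod (Cplus (RtoC 1) (a, t))).
{ assert (0 <= Cmod (Cplus (RtoC 1) (a, t))) by apply Cmod_nonneg'. nra. }
split.
- apply key_lo; try apply Cmod_nonneg'; auto. rewrite HX', HY', HU', HV'. exact HI.
- apply key_hi; try apply Cmod_nonneg'; auto. rewrite HX', HY', HU', HV'. exact HII.
Qed.

Lemma phi_conj (z : C) :
  Cmod (Cdiv (Cconj z) (Cplus (RtoC 1) (Cconj z))) = Cmod (Cdiv z (Cplus (RtoC 1) z)).
Proof.
destruct z as [u v]. unfold Cmod, Cdiv, Cmult, Cinv, Cplus, Cconj, RtoC. simpl.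
f_equal.
replace ((0 + - v) * ((0 + - v) * 1)) with ((0 + v) * ((0 + v) * 1)) by ring.
set (d := (1 + u) * ((1 + u) * 1) + (0 + v) * ((0 + v) * 1)). unfold Rdiv. ring.
Qed.

Lemma Cexp_conj (z : C) : Cexp (Cconj z) = Cconj (Cexp z).
Proof.
destruct z as [u v]. unfold Cexp, Cconj, Re, Im. simpl. rewrite cos_neg, sin_neg. f_equal; ring.
Qed.

Lemma real_part (x : R) : Rasinh (exp x) / (1 + Rasinh (exp x)) <= exp x / (1 + exp x).
Proof.
unfold Rasinh. set (e := exp x). assert (He : 0 < e) by apply exp_pos.
set (q := sqrt (1 + e^2)).
assert (Hq : q*q = 1 + e^2) by (apply sqrt_sqrt; nra).
assert (Hq0 : 0 <= q) by apply sqrt_pos.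
assert (Hq1 : 1 <= q) by nra.
set (rho := e + q).
assert (Hr : 1 <= rho) by (unfold rho; lra).
assert (Hinv : / rho = q - e).
{ unfold rho. field_simplify_eq; [nra|lra]. }
assert (HL := ln_le_sinh rho Hr). rewrite Hinv in HL.
replace ((rho - (q - e))/2) with e in HL by (unfold rho; field).
assert (HL0 := ln_ge_cusa rho Hr).
assert (0 <= ln rho) by (eapply Rle_trans; [|exact HL0]; apply Rdiv_le_0_compat; nra).
clearbody rho. set (L := ln rho) in *.
apply (Rmult_le_reg_r ((1+L)*(1+e))). nra.
replace (L / (1 + L) * ((1 + L) * (1 + e))) with (L*(1+e)) by (field; lra).
replace (e / (1 + e) * ((1 + L) * (1 + e))) with (e*(1+L)) by (field; lra).
nra.
Qed.

Theorem lemma4 :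
  (forall zeta : C, Rabs (Im zeta) <= PI / 2 ->
     / sqrt 2 * Cmod (Cdiv (Cexp zeta) (Cplus (RtoC 1) (Cexp zeta)))
       <= Cmod (Cdiv (asinh_exp zeta) (Cplus (RtoC 1) (asinh_exp zeta)))
     /\ Cmod (Cdiv (asinh_exp zeta) (Cplus (RtoC 1) (asinh_exp zeta)))
       <= sqrt 2 * Cmod (Cdiv (Cexp zeta) (Cplus (RtoC 1) (Cexp zeta))))
  /\ (forall x : R,
     Rasinh (exp x) / (1 + Rasinh (exp x)) <= exp x / (1 + exp x)).
Proof.
split; [|exact real_part].
intros zeta Hz. unfold asinh_exp.
assert (HP := PI_RGT_0).
destruct (Rle_dec 0 (Im zeta)) as [H0|H0].
- apply core_c; destruct zeta as [u v]; unfold Cexp, Re, Im in *; simpl in *.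
  + apply Rmult_le_pos. apply Rlt_le, exp_pos. apply cos_ge_0; apply Rabs_le_between in Hz; lra.
  + apply Rmult_le_pos. apply Rlt_le, exp_pos. apply sin_ge_0; apply Rabs_le_between in Hz; lra.
- rewrite phi_conj.
  rewrite <- (phi_conj (Cexp zeta)), <- Cexp_conj.
  apply core_c; destruct zeta as [u v]; unfold Cexp, Cconj, Re, Im in *; simpl in *.
  + apply Rmult_le_pos. apply Rlt_le, exp_pos. apply cos_ge_0; apply Rabs_le_between in Hz; lra.
  + apply Rmult_le_pos. apply Rlt_le, exp_pos. apply sin_ge_0; apply Rabs_le_between in Hz; lra.
Qed.
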